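(* Let $n\ge 2$ and $k=2$. For any storage network with node set $\mathcal{N}=\{1,\dots,n\}$ and symmetric RTT function $\tau$, there exists an uncoded storage scheme $\mathcal{C}$ such that $L_{max}^{(i)}(\mathcal{C})=\lambda_{1}^{(i)}$ for every $i\in\mathcal{N}$ and $L_{avg}(\mathcal{C})=\frac{1}{2n}\sum_{i\in\mathcal{N}}\left(\lambda_0^{(i)}+\lambda_1^{(i)}\right)$; that is, $\mathcal{C}$ meets the lower bounds $L_{max}^{(i)}\ge\lambda_{k-1}^{(i)}$ and $L_{avg}\ge\frac{1}{kn}\sum_i\sum_{j=0}^{k-1}\lambda_j^{(i)}$, valid for all linear storage codes, with equality.
   Context: A storage network consists of $n$ nodes $\mathcal{N}=\{1,\dots,n\}$ and a round-trip-time function $\tau:\mathcal{N}\times\mathcal{N}\to\mathbb{R}_{\ge0}$ with $\tau(i,j)=\tau(j,i)$, $\tau(i,i)=0$, and $k$ information files $W_1,\dots,W_k$. An uncoded storage scheme stores at node $i$ one file $X_i=W_{\sigma(i)}$ for a map $\sigma:\mathcal{N}\to[k]$. The latency $l_j^{(i)}$ of node $i$ for file $W_j$ is $\min\{\tau(t,i): \sigma(t)=j\}$ (the least wait time after which some node storing $W_j$ is reachable). $L_{max}^{(i)}(\mathcal{C})=\max_{j\in[k]}l_j^{(i)}$ and $L_{avg}(\mathcal{C})=\frac{1}{kn}\sum_{i\in\mathcal{N}}\sum_{j\in[k]}l_j^{(i)}$. For node $i$, $\lambda_0^{(i)}\le\dots\le\lambda_{n-1}^{(i)}$ is the sorted list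 of $\{\tau(j,i):j\in\mathcal{N}\}$, so $\lambda_0^{(i)}=0$. *)

(* Defs.v *)
(* Nodes are 'I_n (node i+1 of the paper is i : 'I_n),
   files are 'I_k (file W_{j+1} is j : 'I_k). *)
From mathcomp Require Import all_boot all_order all_algebra.
Set Implicit Arguments. Unset Strict Implicit. Unset Printing Implicit Defensive.
Import Order.TTheory GRing.Theory Num.Theory.
Local Open Scope ring_scope.

Definition rtt_function (R : realFieldType) (n : nat) (tau : 'I_n -> 'I_n -> R) :=
  [/\ forall i j, tau i j = tau j i, forall i, tau i i = 0 & forall i j, 0 <= tau i j].

(* An uncoded storage scheme is sigma : 'I_n -> 'I_k (node i stores W_(sigma i)).
   A valid scheme stores every file somewhere. *)
Definition stores_all_files (n k : nat) (sigma : 'I_n -> 'I_k) :=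
  forall j : 'I_k, exists t : 'I_n, sigma t = j.

(* Latency l_j^(i) = min { tau t i | sigma t = j }.  The min is taken with the
   initial value max_t tau t i, which is >= every tau t i, so it equals the true
   minimum whenever some node stores W_j. *)
Definition latency (R : realFieldType) (n k : nat) (tau : 'I_n -> 'I_n -> R)
  (sigma : 'I_n -> 'I_k) (i : 'I_n) (j : 'I_k) : R :=
  \big[Order.min/ \big[Order.max/0]_(t < n) tau t i]_(t < n | sigma t == j) tau t i.

Definition L_max (R : realFieldType) (n k : nat) (tau : 'I_n -> 'I_n -> R)
  (sigma : 'I_n -> 'I_k) (i : 'I_n) : R :=
  \big[Order.max/0]_(j < k) latency tau sigma i j.

Definition L_avg (R : realFieldType) (n k : nat) (tau : 'I_n -> 'I_n -> R)
  (sigma : 'I_n -> 'I_k) : R :=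
  (k * n)%:R^-1 * \sum_(i < n) \sum_(j < k) latency tau sigma i j.

(* lambda_m^(i): the m-th smallest (0-indexed) element of the multiset
   { tau(j,i) : j in N }. *)
Definition lambda (R : realFieldType) (n : nat) (tau : 'I_n -> 'I_n -> R)
  (i : 'I_n) (m : nat) : R :=
  nth 0 (sort <=%O [seq tau t i | t <- enum 'I_n]) m.

(* Main.v *)
Require Import Defs.
From mathcomp Require Import all_boot all_order all_algebra.

Import Order.TTheory GRing.Theory Num.Theory.

Section Col.
Context (d : Order.disp_t) (T : finType) (K : orderType d) (f : T -> T) (key : T -> T -> K).
Hypothesis fneq : forall v, f v != v.
Hypothesis fmin : forall u v, u != v -> (key v (f v) <= key v u)%O.
Hypothesis keyC : forall u v, key u v = key v u.
Hypothesis keyI : forall v u, key v (f v) = key v u -> u = f v.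

Lemma coloring_set m (S : {set T}) : #|S| <= m ->
  exists c : T -> bool, forall i, i \in S -> f i \in S -> c (f i) != c i.
Proof.
elim: m S => [|m IH] S.
  rewrite leqn0 => /eqP/cards0_eq ->; exists (fun _ => true) => i; by rewrite inE.
move=> HS.
have [->|[w0 w0S]] := set_0Vmem S.
  exists (fun _ => true) => i; by rewrite inE.
case: (@arg_maxP _ K T w0 (mem S) (fun w => key w (f w)) w0S) => v vS0 vmax.
have vS : v \in S := vS0.
have /IH [c Hc] : #|S :\ v| <= m.
  by move: HS; rewrite (cardsD1 v S) vS add1n ltnS.
exists (fun x => if x == v then ~~ c (f v) else c x) => i iS fiS.
have pre : forall u, u \in S -> u != v -> f u = v -> u = f v.
  move=> u uS uv fuv; apply: keyI; apply/eqP; rewrite eq_le; apply/andP; split.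
    exact: fmin.
  have := vmax u uS; rewrite fuv (keyC u v); exact.
case: (eqVneq i v) => [->|iv].
  rewrite (negbTE (fneq v)) ?eqxx; by case: (c (f v)).
case: (eqVneq (f i) v) => [fiv|fiv].
  rewrite (pre i iS iv fiv); by case: (c (f v)).
apply: Hc; by rewrite !inE ?iv ?fiv.
Qed.

Lemma coloring : exists c : T -> bool, forall i, c (f i) != c i.
Proof.
have [c Hc] := @coloring_set #|[set: T]| [set: T] (leqnn _).
by exists c => i; apply: Hc; rewrite inE.
Qed.
End Col.

Local Open Scope ring_scope.

Lemma sort_cons_min {R : realFieldType} {x : R} {s : seq R} :
  all (fun y => x <= y) s -> sort <=%O (x :: s) = x :: sort <=%O s.
Proof.
move=> Hs; apply: (sorted_eq le_trans le_anti).
- exact: (sort_sorted le_total).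
- by rewrite /= (path_sortedE le_trans) all_sort Hs (sort_sorted le_total).
- by rewrite perm_sort perm_cons perm_sym perm_sort.
Qed.

Lemma sum2 (R : realFieldType) (s : 'I_2) (c : R) :
  \sum_(j < 2) (if j == s then 0 else c) = c.
Proof.
rewrite big_ord_recr big_ord1 /=.
case: s => [[|[|m]] Hm] //=.
- by rewrite add0r.
- by rewrite addr0.
Qed.

Lemma max2 (R : realFieldType) (s : 'I_2) (c : R) : 0 <= c ->
  \big[Order.max/0]_(j < 2) (if j == s then 0 else c) = c.
Proof.
move=> c0; apply/eqP; rewrite eq_le; apply/andP; split.
  by apply: bigmax_le => // j _; case: eqP.
have [j0 hj0] : exists j0 : 'I_2, (if j0 == s then 0 else c) = c.
  case: s => [[|[|m]] Hm] //; [exists ord_max | exists ord0]; by [].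
rewrite -{1}hj0.
exact: le_bigmax_cond.
Qed.

Lemma I2 (a b j : 'I_2) : a != b -> a != j -> b = j.
Proof.
by case: a => [[|[|?]] ?] ; case: b => [[|[|?]] ?]; case: j => [[|[|?]] ?] //= *; apply: val_inj.
Qed.

Theorem corollary1 (R : realFieldType) (n : nat) (tau : 'I_n -> 'I_n -> R) :
  (2 <= n)%N -> rtt_function tau ->
  exists sigma : 'I_n -> 'I_2,
    [/\ stores_all_files sigma,
        forall i : 'I_n, L_max tau sigma i = lambda tau i 1 &
        L_avg tau sigma = (2 * n)%:R^-1 * \sum_(i < n) (lambda tau i 0 + lambda tau i 1)].
Proof.
case: n tau => [|[|n]] // tau _ [tauC tau0 tauge0].
pose key (v u : 'I_n.+2) : R *l (nat *l nat) := (tau v u, (minn v u, maxn v u)).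
pose t0 (v : 'I_n.+2) : 'I_n.+2 := if v == ord0 then ord_max else ord0.
have t0P : forall v, t0 v != v.
  move=> v; rewrite /t0; case: (eqVneq v ord0) => [->|vn]; last by rewrite eq_sym.
  by apply/eqP => /(congr1 val).
pose f (v : 'I_n.+2) := Order.arg_min (t0 v) (fun t => t != v) (key v).
have fP : forall v, f v != v /\ forall u, u != v -> (key v (f v) <= key v u)%O.
  move=> v; rewrite /f; case: (@arg_minP _ _ _ (t0 v) (fun t => t != v) (key v) (t0P v)).
  by move=> w wv wmin; split.
have keyC : forall u v, key u v = key v u.
  by move=> u v; rewrite /key tauC minnC maxnC.
have keyI : forall v u, key v (f v) = key v u -> u = f v.
  move=> v u [_ h1 h2]; apply: val_inj => /=.
  have := addn_min_max v (f v); rewrite h1 h2 addn_min_max => /eqP.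
  by rewrite eqn_add2l => /eqP.
have [c Hc] := @coloring _ _ _ f key (fun v => proj1 (fP v)) (fun u v => proj2 (fP v) u) keyC keyI.
have fmin : forall v u, u != v -> tau (f v) v <= tau u v.
  move=> v u uv; have := proj2 (fP v) u uv; rewrite /key lexi_pair => /andP[].
  by rewrite (tauC (f v)) (tauC u).
pose sigma (i : 'I_n.+2) : 'I_2 := if c i then ord_max else ord0.
have sigE : forall x y, (sigma x == sigma y) = (c x == c y).
  by move=> x y; rewrite /sigma; case: (c x); case: (c y).
have latE : forall i j, latency tau sigma i j = if j == sigma i then 0 else tau (f i) i.
  move=> i j; apply/eqP; rewrite eq_le; apply/andP; split.
  - case: eqP => [->|/eqP jn].
      by rewrite -(tau0 i); apply: bigmin_le_cond.
    apply: bigmin_le_cond.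
    move: jn; rewrite /sigma; have := Hc i.
    by case: (c i); case: (c (f i)) => //= _; case: j => [[|[|m]] Hm].
  - case: eqP => [->|/eqP jn].
      by apply: le_bigmin => [|t _]; [exact: bigmax_ge_id | exact: tauge0].
    apply: le_bigmin.
      exact: (@le_bigmax_cond _ _ _ _ (f i) predT).
    move=> t /eqP st; apply: fmin; apply: contra_neq jn => ti; by rewrite -st ti.
have lamE : forall i, lambda tau i 0 = 0 /\ lambda tau i 1 = tau (f i) i.
  move=> i; rewrite /lambda.
  set r := rem (f i) (rem i (enum 'I_n.+2)).
  have Hp : perm_eq [seq tau t i | t <- enum 'I_n.+2]
      (tau i i :: tau (f i) i :: [seq tau t i | t <- r]).
    have e1 : perm_eq (enum 'I_n.+2) (i :: f i :: r).
      have ie : i \in enum 'I_n.+2 by rewrite mem_enum.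
      apply: perm_trans (perm_to_rem ie) _.
      rewrite perm_cons; apply: perm_to_rem.
      by rewrite mem_rem_uniq ?enum_uniq // inE (proj1 (fP i)) mem_enum.
    exact: (perm_map (fun t => tau t i) e1).
  have /(perm_sortP le_total le_trans le_anti) -> := Hp.
  have A1 : all (fun y => tau (f i) i <= y) [seq tau t i | t <- r].
    apply/allP => y /mapP [t tr ->]; apply: fmin.
    move: tr; rewrite /r mem_rem_uniq ?rem_uniq ?enum_uniq // inE => /andP[_].
    by rewrite mem_rem_uniq ?enum_uniq // inE => /andP[].
  have A0 : all (fun y => tau i i <= y) (tau (f i) i :: [seq tau t i | t <- r]).
    by apply/allP => y; rewrite inE tau0 => /orP[/eqP -> | /mapP [t _ ->]].
  by rewrite (sort_cons_min A0) (sort_cons_min A1) tau0.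
exists sigma; split.
- move=> j; have hne : sigma ord0 != sigma (f ord0) by rewrite sigE eq_sym Hc.
  case: (eqVneq (sigma ord0) j) => [e|ne]; first by exists ord0.
  by exists (f ord0); apply: I2 hne ne.
- move=> i; rewrite /L_max (eq_bigr _ (fun j _ => latE i j)) max2 ?(proj2 (lamE i)) //.
- rewrite /L_avg; congr (_ * _); apply: eq_bigr => i _.
  by rewrite (eq_bigr _ (fun j _ => latE i j)) sum2 (proj1 (lamE i)) (proj2 (lamE i)) add0r.
Qed.
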